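(* For every closed $\mathcal L$-term $t$, neither the code of the sentence $\mathrm Pt$ nor the code of the sentence $\neg\mathrm Pt$ belongs to $P_\infty^+$, where $(T_\infty,P_\infty)$ is the least fixed point of $\Gamma_{\mathscr{TP}}$ (the stage at which the sequence $(T_\alpha,P_\alpha)$ stabilizes).
   Context: Language. Let $\mathcal L_{\mathbb N}$ be the language of first-order Peano arithmetic and $\mathcal L=\mathcal L_{\mathbb N}\cup\{\mathrm T,\mathrm P\}$ with unary predicates $\mathrm T,\mathrm P$. $\mathcal L$-formulas are in Tait style: literals are $s=t$, $s\neq t$, $\mathrm Tt$, $\neg\mathrm Tt$, $\mathrm Pt$, $\neg\mathrm Pt$; formulas are built from literals by $\wedge,\vee,\forall,\exists$; negation of an arbitrary formula is defined by De Morgan dualities with $\neg\neg\varphi:=\varphi$. A standard Gödel numbering is fixed; $\#e$ is the code of $e$, $\ulcorner e\urcorner$ the numeral of $\#e$, $\mathrm{val}(t)$ the value of a closed term $t$, $\dot\neg$ the primitive recursive function with $\dot\neg(\#\varphi)=\#\neg\varphi$; $\mathrm T\varphi,\mathrm P\varphi$ abbreviate $\mathrm T\ulcorner\varphi\urcorner,\mathrm P\ulcorner\varphi\urcorner$. Semantics. A partial model is $(\mathbb N,T,P)$ with $\mathbb N$ the standard model and $T=(T^+,T^-)$, $P=(P^+,P^-)$ pairs of subsets of $\omega$. Strong Kleene satisfaction $\models_{SK}$: arithmetic literals evaluated in $\mathbb N$; $\mathrm Tt$ satisfied iff $\mathrm{val}(t)\in T^+$, $\neg\mathrm Tt$ iff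 $\mathrm{val}(t)\in T^-$, likewise for $\mathrm P$ with $P^\pm$; conjunction iff both, disjunction iff at least one, $\forall x\varphi(x)$ iff all numeral instances, $\exists x\varphi(x)$ iff some numeral instance. Base paradoxicality. $\mathrm{PA}[\mathrm{SK}]$ is the two-sided sequent calculus for Strong Kleene logic with identity in $\mathcal L$ (initial sequents $\varphi\Rightarrow\varphi$, cut, weakening, the rule from $\Gamma\Rightarrow\Delta,\varphi$ infer $\neg\varphi,\Gamma\Rightarrow\Delta$, usual rules for $\wedge,\vee,\forall,\exists$, reflexivity $\Rightarrow t=t$, replacement from $\Gamma\Rightarrow\Delta,\varphi(t)$ infer $\Gamma\Rightarrow\Delta,s\neq t,\varphi(s)$) plus the initial sequents of Peano arithmetic and the induction rule for all $\mathcal L$-formulas. A sentence $\varphi$ is base paradoxical iff $\mathrm{PA}[\mathrm{SK}]$ derives $\varphi\Leftrightarrow\neg\mathrm T\varphi$ and $\neg\varphi\Leftrightarrow\mathrm T\varphi$ ($\Leftrightarrow$ meaning both sequents). $B(x)$ is an $\mathcal L_{\mathbb N}$-formula defining in $\mathbb N$ the set of codes of base paradoxical sentences, and $\Pi(x):=B(x)\vee B(\dot\neg x)$. Jump and sequence. Let $\mathscr P(x)$ be the $\mathcal L$-formula which is the disjunction of: (1) $x$ codes a sentence and $\Pi(x)$; (2) $x$ codes a sentence $\mathrm Tt$ ($t$ a closed term) and $\mathrm P(\mathrm{val}(t))$; (3) $x$ codes a sentence $\neg\mathrm Tt$ and $\mathrm P(\mathrm{val}(t))$; (4) $x$ codes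 a sentence $\psi\wedge\theta$ and $(\mathrm P\psi\wedge\mathrm P\theta)\vee(\mathrm T\psi\wedge\mathrm P\theta)\vee(\mathrm T\theta\wedge\mathrm P\psi)$; (5) $x$ codes a sentence $\psi\vee\theta$ and $(\mathrm P\psi\wedge\mathrm P\theta)\vee(\neg\mathrm T\psi\wedge\mathrm P\theta)\vee(\neg\mathrm T\theta\wedge\mathrm P\psi)$; (6) $x$ codes a sentence $\forall v\psi$ and $\exists y\,\mathrm P\psi(\dot y)\wedge\forall y(\mathrm P\psi(\dot y)\vee\mathrm T\psi(\dot y))$; (7) $x$ codes a sentence $\exists v\psi$ and $\exists y\,\mathrm P\psi(\dot y)\wedge\forall y(\mathrm P\psi(\dot y)\vee\neg\mathrm T\psi(\dot y))$; here $\psi(\dot y)$ is the code of the result of substituting the numeral of $y$ for $v$. Write $\mathscr P(\varphi)$ for $\mathscr P(\ulcorner\varphi\urcorner)$. Define $\Gamma_{\mathscr{TP}}(T,P)=\big((\{\#\varphi:(\mathbb N,T,P)\models_{SK}\varphi\},\{\#\varphi:(\mathbb N,T,P)\models_{SK}\neg\varphi\}),(\{\#\varphi:(\mathbb N,T,P)\models_{SK}\mathscr P(\varphi)\},\{\#\varphi:(\mathbb N,T,P)\models_{SK}\varphi\vee\neg\varphi\})\big)$, $\varphi$ ranging over $\mathcal L$-sentences. Define $(T_0,P_0)=((\emptyset,\emptyset),(\emptyset,\emptyset))$, $(T_{\beta+1},P_{\beta+1})=\Gamma_{\mathscr{TP}}(T_\beta,P_\beta)$, $(T_\lambda,P_\lambda)=\bigcup_{\beta<\lambda}(T_\beta,P_\beta)$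 (componentwise union) for limit $\lambda$. This sequence reaches a fixed point $(T_\infty,P_\infty)$, $P_\infty=(P_\infty^+,P_\infty^-)$. *)

(* Defs.v *)
From Stdlib Require Import List Arith.
Import ListNotations.

Inductive term : Type :=
| Var   : nat -> term
| Zero  : term
| Succ  : term -> term
| Plus  : term -> term -> term
| Times : term -> term -> term.

(* Tait-style L-formulas: literals, /\, \/, forall, exists *)
Inductive form : Type :=
| Eq   : term -> term -> form
| Neq  : term -> term -> form
| Tr   : term -> form
| NTr  : term -> form
| Pr   : term -> form
| NPr  : term -> form
| And  : form -> form -> form
| Or   : form -> form -> form
| All  : form -> form
| Ex   : form -> form.

Fixpoint neg (f : form) : form :=
  match f with
  | Eq s t => Neq s t
  | Neq s t => Eq s t
  | Tr t => NTr t
  | NTr t => Tr t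
  | Pr t => NPr t
  | NPr t => Pr t
  | And a b => Or (neg a) (neg b)
  | Or a b => And (neg a) (neg b)
  | All a => Ex (neg a)
  | Ex a => All (neg a)
  end.

Fixpoint tsubst (s : nat -> term) (t : term) : term :=
  match t with
  | Var k => s k
  | Zero => Zero
  | Succ u => Succ (tsubst s u)
  | Plus u v => Plus (tsubst s u) (tsubst s v)
  | Times u v => Times (tsubst s u) (tsubst s v)
  end.

Definition tlift (t : term) : term := tsubst (fun k => Var (S k)) t.

Definition up (s : nat -> term) : nat -> term :=
  fun k => match k with 0 => Var 0 | S k' => tlift (s k') end.

Fixpoint fsubst (s : nat -> term) (f : form) : form :=
  match f with
  | Eq a b => Eq (tsubst s a) (tsubst s b)
  | Neq a b => Neq (tsubst s a) (tsubst s b)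
  | Tr a => Tr (tsubst s a)
  | NTr a => NTr (tsubst s a)
  | Pr a => Pr (tsubst s a)
  | NPr a => NPr (tsubst s a)
  | And a b => And (fsubst s a) (fsubst s b)
  | Or a b => Or (fsubst s a) (fsubst s b)
  | All a => All (fsubst (up s) a)
  | Ex a => Ex (fsubst (up s) a)
  end.

Definition flift (f : form) : form := fsubst (fun k => Var (S k)) f.

Definition inst (f : form) (t : term) : form :=
  fsubst (fun k => match k with 0 => t | S k' => Var k' end) f.

Definition substS (f : form) : form :=
  fsubst (fun k => match k with 0 => Succ (Var 0) | S k' => Var (S k') end) f.

Fixpoint tclosedn (n : nat) (t : term) : Prop :=
  match t with
  | Var k => k < n
  | Zero => True
  | Succ u => tclosedn n u
  | Plus u v | Times u v => tclosedn n u /\ tclosedn n v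
  end.

Fixpoint fclosedn (n : nat) (f : form) : Prop :=
  match f with
  | Eq a b | Neq a b => tclosedn n a /\ tclosedn n b
  | Tr a | NTr a | Pr a | NPr a => tclosedn n a
  | And a b | Or a b => fclosedn n a /\ fclosedn n b
  | All a | Ex a => fclosedn (S n) a
  end.

Definition closed_term (t : term) : Prop := tclosedn 0 t.
Definition sentence (f : form) : Prop := fclosedn 0 f.

Fixpoint num (n : nat) : term :=
  match n with 0 => Zero | S m => Succ (num m) end.

Fixpoint eval (rho : nat -> nat) (t : term) : nat :=
  match t with
  | Var k => rho k
  | Zero => 0
  | Succ u => S (eval rho u)
  | Plus u v => eval rho u + eval rho v
  | Times u v => eval rho u * eval rho v
  end.

Definition val (t : term) : nat := eval (fun _ => 0) t.

Definition cp (a b : nat) : nat := (a + b) * (a + b + 1) / 2 + b.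

Fixpoint tcode (t : term) : nat :=
  match t with
  | Var k => cp 0 k
  | Zero => cp 1 0
  | Succ u => cp 2 (tcode u)
  | Plus u v => cp 3 (cp (tcode u) (tcode v))
  | Times u v => cp 4 (cp (tcode u) (tcode v))
  end.

Fixpoint code (f : form) : nat :=
  match f with
  | Eq a b => cp 0 (cp (tcode a) (tcode b))
  | Neq a b => cp 1 (cp (tcode a) (tcode b))
  | Tr a => cp 2 (tcode a)
  | NTr a => cp 3 (tcode a)
  | Pr a => cp 4 (tcode a)
  | NPr a => cp 5 (tcode a)
  | And a b => cp 6 (cp (code a) (code b))
  | Or a b => cp 7 (cp (code a) (code b))
  | All a => cp 8 (code a)
  | Ex a => cp 9 (code a)
  end.

Definition quote (f : form) : term := num (code f).

Record pmodel : Type := PM {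
  Tp : nat -> Prop;
  Tm : nat -> Prop;
  Pp : nat -> Prop;
  Pm : nat -> Prop
}.

(* Strong Kleene satisfaction for sentences (numeral instances for quantifiers) *)
Inductive SK (M : pmodel) : form -> Prop :=
| SK_eq  : forall s t, val s = val t -> SK M (Eq s t)
| SK_neq : forall s t, val s <> val t -> SK M (Neq s t)
| SK_tr  : forall t, Tp M (val t) -> SK M (Tr t)
| SK_ntr : forall t, Tm M (val t) -> SK M (NTr t)
| SK_pr  : forall t, Pp M (val t) -> SK M (Pr t)
| SK_npr : forall t, Pm M (val t) -> SK M (NPr t)
| SK_and : forall a b, SK M a -> SK M b -> SK M (And a b)
| SK_orl : forall a b, SK M a -> SK M (Or a b)
| SK_orr : forall a b, SK M b -> SK M (Or a b)
| SK_all : forall a, (forall n, SK M (inst a (num n))) -> SK M (All a)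
| SK_ex  : forall a n, SK M (inst a (num n)) -> SK M (Ex a).

(* Initial sequents of PA: universal closures of the basic axioms
   (variable 0 = innermost quantifier). *)
Inductive PAax : form -> Prop :=
| PA1 : PAax (All (Neq (Succ (Var 0)) Zero))
| PA2 : PAax (All (All (Or (Neq (Succ (Var 1)) (Succ (Var 0))) (Eq (Var 1) (Var 0)))))
| PA3 : PAax (All (Eq (Plus (Var 0) Zero) (Var 0)))
| PA4 : PAax (All (All (Eq (Plus (Var 1) (Succ (Var 0))) (Succ (Plus (Var 1) (Var 0))))))
| PA5 : PAax (All (Eq (Times (Var 0) Zero) Zero))
| PA6 : PAax (All (All (Eq (Times (Var 1) (Succ (Var 0))) (Plus (Times (Var 1) (Var 0)) (Var 1))))).

Inductive Deriv : list form -> list form -> Prop :=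
| D_init : forall f, Deriv [f] [f]
| D_weak : forall G D G' D', Deriv G D -> incl G G' -> incl D D' -> Deriv G' D'
| D_cut  : forall G D f, Deriv G (f :: D) -> Deriv (f :: G) D -> Deriv G D
| D_negL : forall G D f, Deriv G (f :: D) -> Deriv (neg f :: G) D
| D_andL : forall G D a b, Deriv (a :: b :: G) D -> Deriv (And a b :: G) D
| D_andR : forall G D a b, Deriv G (a :: D) -> Deriv G (b :: D) -> Deriv G (And a b :: D)
| D_orL  : forall G D a b, Deriv (a :: G) D -> Deriv (b :: G) D -> Deriv (Or a b :: G) D
| D_orR  : forall G D a b, Deriv G (a :: b :: D) -> Deriv G (Or a b :: D)
| D_allL : forall G D a t, Deriv (inst a t :: G) D -> Deriv (All a :: G) D
| D_allR : forall G D a, Deriv (map flift G) (a :: map flift D) -> Deriv G (All a :: D)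
| D_exL  : forall G D a, Deriv (a :: map flift G) (map flift D) -> Deriv (Ex a :: G) D
| D_exR  : forall G D a t, Deriv G (inst a t :: D) -> Deriv G (Ex a :: D)
| D_refl : forall t, Deriv [] [Eq t t]
| D_repl : forall G D a s t,
    Deriv G (inst a t :: D) -> Deriv G (Neq s t :: inst a s :: D)
| D_PA   : forall f, PAax f -> Deriv [] [f]
| D_PAem : forall s t, Deriv [] [Eq s t; Neq s t]
| D_ind  : forall G D a t,
    Deriv (a :: map flift G) (substS a :: map flift D) ->
    Deriv (inst a Zero :: G) (inst a t :: D).

Definition base_paradoxical (f : form) : Prop :=
  sentence f /\
  Deriv [f] [NTr (quote f)] /\ Deriv [NTr (quote f)] [f] /\
  Deriv [neg f] [Tr (quote f)] /\ Deriv [Tr (quote f)] [neg f].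

Definition Bset (n : nat) : Prop :=
  exists f, sentence f /\ n = code f /\ base_paradoxical f.

(* Strong Kleene value of script-P at the numeral of n, written out clause
   by clause (its arithmetical parts are two-valued). *)
Definition scriptP (M : pmodel) (n : nat) : Prop :=
  (exists f, sentence f /\ n = code f /\ (Bset (code f) \/ Bset (code (neg f))))
  \/ (exists t, closed_term t /\ n = code (Tr t) /\ Pp M (val t))
  \/ (exists t, closed_term t /\ n = code (NTr t) /\ Pp M (val t))
  \/ (exists a b, sentence (And a b) /\ n = code (And a b) /\
        ((Pp M (code a) /\ Pp M (code b)) \/ (Tp M (code a) /\ Pp M (code b))
         \/ (Tp M (code b) /\ Pp M (code a))))
  \/ (exists a b, sentence (Or a b) /\ n = code (Or a b) /\
        ((Pp M (code a) /\ Pp M (code b)) \/ (Tm M (code a) /\ Pp M (code b))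
         \/ (Tm M (code b) /\ Pp M (code a))))
  \/ (exists a, sentence (All a) /\ n = code (All a) /\
        (exists y, Pp M (code (inst a (num y)))) /\
        (forall y, Pp M (code (inst a (num y))) \/ Tp M (code (inst a (num y)))))
  \/ (exists a, sentence (Ex a) /\ n = code (Ex a) /\
        (exists y, Pp M (code (inst a (num y)))) /\
        (forall y, Pp M (code (inst a (num y))) \/ Tm M (code (inst a (num y))))).

Definition GammaTP (M : pmodel) : pmodel :=
  PM (fun n => exists f, sentence f /\ n = code f /\ SK M f)
     (fun n => exists f, sentence f /\ n = code f /\ SK M (neg f))
     (fun n => exists f, sentence f /\ n = code f /\ scriptP M n)
     (fun n => exists f, sentence f /\ n = code f /\ SK M (Or f (neg f))).

Definition pm_le (M N : pmodel) : Prop :=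
  (forall n, Tp M n -> Tp N n) /\ (forall n, Tm M n -> Tm N n) /\
  (forall n, Pp M n -> Pp N n) /\ (forall n, Pm M n -> Pm N n).

(* the least fixed point (T_infty, P_infty) of the monotone operator GammaTP:
   intersection of all pre-fixed points (Knaster-Tarski) *)
Definition lfpTP : pmodel :=
  PM (fun n => forall X, pm_le (GammaTP X) X -> Tp X n)
     (fun n => forall X, pm_le (GammaTP X) X -> Tm X n)
     (fun n => forall X, pm_le (GammaTP X) X -> Pp X n)
     (fun n => forall X, pm_le (GammaTP X) X -> Pm X n).

(* Main.v *)
Require Import Defs.
From Stdlib Require Import List Arith Lia Classical.
Import ListNotations.

Definition Tn (n : nat) := n * (n + 1) / 2.

Lemma Tn_S s : Tn (S s) = Tn s + S s.
Proof.
  unfold Tn.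
  replace (S s * (S s + 1)) with (s * (s + 1) + S s * 2) by nia.
  rewrite Nat.div_add by lia. reflexivity.
Qed.

Lemma Tn_mono s s' : s <= s' -> Tn s <= Tn s'.
Proof. induction 1; [lia| rewrite Tn_S; lia]. Qed.

Lemma cp_inj a b c d : cp a b = cp c d -> a = c /\ b = d.
Proof.
  unfold cp. fold (Tn (a+b)). fold (Tn (c+d)). intro H.
  assert (a + b = c + d).
  { destruct (lt_eq_lt_dec (a+b) (c+d)) as [[h|h]|h]; auto.
    - assert (Tn (S (a+b)) <= Tn (c+d)) by (apply Tn_mono; lia).
      rewrite Tn_S in H0. lia.
    - assert (Tn (S (c+d)) <= Tn (a+b)) by (apply Tn_mono; lia).
      rewrite Tn_S in H0. lia. }
  rewrite H0 in H. lia.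
Qed.

Section Sem.
Variables (S0 P0 : nat -> Prop).

Definition scons (n : nat) (rho : nat -> nat) : nat -> nat :=
  fun k => match k with 0 => n | S k' => rho k' end.

Fixpoint sat (rho : nat -> nat) (f : form) : Prop :=
  match f with
  | Eq a b => eval rho a = eval rho b
  | Neq a b => eval rho a <> eval rho b
  | Tr a => S0 (eval rho a)
  | NTr a => ~ S0 (eval rho a)
  | Pr a => P0 (eval rho a)
  | NPr a => ~ P0 (eval rho a)
  | And a b => sat rho a /\ sat rho b
  | Or a b => sat rho a \/ sat rho b
  | All a => forall n, sat (scons n rho) a
  | Ex a => exists n, sat (scons n rho) a
  end.

Lemma eval_ext rho rho' t : (forall k, rho k = rho' k) -> eval rho t = eval rho' t.
Proof. intro H; induction t; simpl; auto. Qed.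

Lemma sat_ext f : forall rho rho', (forall k, rho k = rho' k) -> (sat rho f <-> sat rho' f).
Proof.
  induction f; intros rho rho' H; simpl;
    repeat rewrite (eval_ext rho rho' _ H); try tauto.
  - rewrite (IHf1 _ _ H), (IHf2 _ _ H); tauto.
  - rewrite (IHf1 _ _ H), (IHf2 _ _ H); tauto.
  - split; intros A n; [rewrite <- (IHf (scons n rho))|rewrite (IHf (scons n rho))]; eauto;
      intros [|k]; simpl; auto.
  - split; intros [n A]; exists n; [rewrite <- (IHf (scons n rho))|rewrite (IHf (scons n rho))]; eauto;
      intros [|k]; simpl; auto.
Qed.

Lemma eval_subst rho s t : eval rho (tsubst s t) = eval (fun k => eval rho (s k)) t.
Proof. induction t; simpl; auto. Qed.

Lemma sat_subst f : forall rho s, sat rho (fsubst s f) <-> sat (fun k => eval rho (s k)) f.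
Proof.
  induction f; intros rho s; simpl; repeat rewrite eval_subst; try tauto.
  - rewrite IHf1, IHf2; tauto.
  - rewrite IHf1, IHf2; tauto.
  - split; intros A n; specialize (A n); rewrite IHf in *;
      (eapply sat_ext; [|exact A]); intros [|k]; simpl; auto;
      unfold tlift; rewrite eval_subst; simpl; apply eval_ext; auto.
  - split; intros [n A]; exists n; rewrite IHf in *;
      (eapply sat_ext; [|exact A]); intros [|k]; simpl; auto;
      unfold tlift; rewrite eval_subst; simpl; apply eval_ext; auto.
Qed.

Lemma sat_inst rho a t : sat rho (inst a t) <-> sat (scons (eval rho t) rho) a.
Proof. unfold inst. rewrite sat_subst. apply sat_ext. intros [|k]; reflexivity. Qed.

Lemma sat_flift rho f : sat rho (flift f) <-> sat (fun k => rho (S k)) f.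
Proof. unfold flift. rewrite sat_subst. apply sat_ext. intros k; reflexivity. Qed.

Lemma sat_substS rho a : sat rho (substS a) <-> sat (scons (S (rho 0)) (fun k => rho (S k))) a.
Proof. unfold substS. rewrite sat_subst. apply sat_ext. intros [|k]; reflexivity. Qed.

Lemma sat_neg f : forall rho, sat rho (neg f) <-> ~ sat rho f.
Proof.
  induction f; intro rho; simpl; try tauto.
  - rewrite IHf1, IHf2; tauto.
  - rewrite IHf1, IHf2; tauto.
  - split.
    + intros [n A] B. apply IHf in A. auto.
    + intro A. apply NNPP. intro B. apply A. intro n. apply NNPP. intro C.
      apply B. exists n. apply IHf. auto.
  - split.
    + intros A [n B]. specialize (A n). apply IHf in A. auto.
    + intros A n. apply IHf. intro B. eauto.
Qed.

Definition valid (G D : list form) : Prop :=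
  forall rho, (forall g, In g G -> sat rho g) -> exists d, In d D /\ sat rho d.

Lemma lift_all rho G : (forall g, In g G -> sat rho g) ->
  forall n g, In g (map flift G) -> sat (scons n rho) g.
Proof.
  intros H n g Hg. apply in_map_iff in Hg. destruct Hg as [g' [<- Hg']].
  apply sat_flift. simpl. auto.
Qed.

Lemma lift_ex rho D n d : In d (map flift D) -> sat (scons n rho) d -> exists d, In d D /\ sat rho d.
Proof.
  intros Hd Hs. apply in_map_iff in Hd. destruct Hd as [d' [<- Hd']].
  apply sat_flift in Hs. simpl in Hs. eauto.
Qed.

Lemma soundness G D : Deriv G D -> valid G D.
Proof.
  induction 1; intros rho HG.
  - exists f. split; [left; auto| apply HG; left; auto].
  - destruct (IHDeriv rho) as [d [Hd Hs]]; eauto.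
  - destruct (IHDeriv1 rho HG) as [d [[<-|Hd] Hs]]; eauto.
    apply IHDeriv2. intros g [<-|Hg]; auto.
  - destruct (IHDeriv rho) as [d [[<-|Hd] Hs]]; eauto.
    + intros; apply HG; right; auto.
    + exfalso. apply (sat_neg f rho); auto. apply HG; left; auto.
  - apply IHDeriv. assert (sat rho (And a b)) by (apply HG; left; auto).
    simpl in H0. intros g [<-|[<-|Hg]]; try tauto. apply HG; right; auto.
  - destruct (classic (exists d, In d D /\ sat rho d)) as [E|E].
    { destruct E as [d [? ?]]. exists d; split; [right|]; auto. }
    destruct (IHDeriv1 rho HG) as [d [[<-|Hd] Hs]]; [|exfalso; eauto].
    destruct (IHDeriv2 rho HG) as [d' [[<-|Hd'] Hs']]; [|exfalso; eauto].
    exists (And a b). split; [left; auto| simpl; auto].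
  - assert (sat rho (Or a b)) by (apply HG; left; auto). simpl in H1.
    destruct H1; [apply IHDeriv1|apply IHDeriv2]; intros g [<-|Hg]; auto; apply HG; right; auto.
  - destruct (IHDeriv rho HG) as [d [[<-|[<-|Hd]] Hs]].
    + exists (Or a b). split; [left|simpl]; auto.
    + exists (Or a b). split; [left|simpl]; auto.
    + exists d. split; [right|]; auto.
  - apply IHDeriv. assert (sat rho (All a)) by (apply HG; left; auto).
    intros g [<-|Hg]; [|apply HG; right; auto]. apply sat_inst. apply H0.
  - destruct (classic (exists d, In d D /\ sat rho d)) as [E|E].
    { destruct E as [d [? ?]]. exists d; split; [right|]; auto. }
    exists (All a). split; [left; auto|]. intro n.
    destruct (IHDeriv (scons n rho) (lift_all rho G HG n)) as [d [[<-|Hd] Hs]]; auto.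
    exfalso. apply E. eapply lift_ex; eauto.
  - assert (sat rho (Ex a)) by (apply HG; left; auto). destruct H0 as [n Hn].
    destruct (IHDeriv (scons n rho)) as [d [Hd Hs]].
    + intros g [<-|Hg]; auto. apply (lift_all rho G); auto. intros; apply HG; right; auto.
    + eapply lift_ex; eauto.
  - destruct (IHDeriv rho HG) as [d [[<-|Hd] Hs]].
    + exists (Ex a). split; [left; auto|]. exists (eval rho t). apply sat_inst; auto.
    + exists d; split; [right|]; auto.
  - exists (Eq t t). split; [left|simpl]; auto.
  - destruct (IHDeriv rho HG) as [d [[<-|Hd] Hs]].
    + destruct (Nat.eq_dec (eval rho s) (eval rho t)) as [E|E].
      * exists (inst a s). split; [right; left; auto|].
        apply sat_inst. rewrite E. apply sat_inst. auto.
      * exists (Neq s t). split; [left|simpl]; auto.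
    + exists d; split; [right; right|]; auto.
  - exists f. split; [left; auto|].
    destruct H; simpl; intros; try lia.
  - destruct (Nat.eq_dec (eval rho s) (eval rho t)) as [E|E].
    + exists (Eq s t); split; [left|simpl]; auto.
    + exists (Neq s t); split; [right;left|simpl]; auto.
  - destruct (classic (exists d, In d D /\ sat rho d)) as [E|E].
    { destruct E as [d [? ?]]. exists d; split; [right|]; auto. }
    assert (Hall : forall m, sat (scons m rho) a).
    { assert (H0 : sat rho (inst a Zero)) by (apply HG; left; auto).
      apply sat_inst in H0. simpl in H0.
      induction m; auto.
      destruct (IHDeriv (scons m rho)) as [d [[<-|Hd] Hs]].
      - intros g [<-|Hg]; auto. apply (lift_all rho G); auto. intros; apply HG; right; auto.
      - apply sat_substS in Hs. simpl in Hs. auto.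
      - exfalso. apply E. eapply lift_ex; eauto. }
    exists (inst a t). split; [left; auto|]. apply sat_inst. apply Hall.
Qed.

End Sem.

Lemma not_bp_Pr u : ~ base_paradoxical (Pr u).
Proof.
  intros [_ [H _]]. apply soundness with (S0 := fun _ => True) (P0 := fun _ => True) in H; specialize (H (fun _ => 0)).
  destruct H as [d [[<-|[]] Hs]].
  - intros g [<-|[]]. simpl. auto.
  - simpl in Hs. auto.
Qed.

Lemma not_bp_NPr u : ~ base_paradoxical (NPr u).
Proof.
  intros [_ [H _]]. apply soundness with (S0 := fun _ => True) (P0 := fun _ => False) in H; specialize (H (fun _ => 0)).
  destruct H as [d [[<-|[]] Hs]].
  - intros g [<-|[]]. simpl. auto.
  - simpl in Hs. auto.
Qed.

Lemma code4 g x : code g = cp 4 x -> exists u, g = Pr u.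
Proof. destruct g; simpl; intro H; apply cp_inj in H; destruct H as [H _]; try discriminate; eauto. Qed.

Lemma code5 g x : code g = cp 5 x -> exists u, g = NPr u.
Proof. destruct g; simpl; intro H; apply cp_inj in H; destruct H as [H _]; try discriminate; eauto. Qed.

Lemma notB4 x : ~ Bset (cp 4 x).
Proof.
  intros [g [_ [E B]]]. symmetry in E. destruct (code4 _ _ E) as [u ->].
  apply (not_bp_Pr u); auto.
Qed.

Lemma notB5 x : ~ Bset (cp 5 x).
Proof.
  intros [g [_ [E B]]]. symmetry in E. destruct (code5 _ _ E) as [u ->].
  apply (not_bp_NPr u); auto.
Qed.

Definition Xm : pmodel :=
  PM (fun _ => True) (fun _ => True)
     (fun n => ~ exists x, n = cp 4 x \/ n = cp 5 x) (fun _ => True).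

Lemma tag_ne k y x : k <> 4 -> k <> 5 -> cp k y = cp 4 x \/ cp k y = cp 5 x -> False.
Proof. intros h4 h5 [E|E]; apply cp_inj in E; lia. Qed.

Lemma Xm_pre : pm_le (GammaTP Xm) Xm.
Proof.
  unfold pm_le; simpl. split; [auto|split; [auto|split; [|auto]]].
  intros n [f [_ [_ HP]]] [x Hx].
  unfold scriptP in HP.
  destruct HP as [[f' [_ [E [B|B]]]]|[[t [_ [E _]]]|[[t [_ [E _]]]|[[a [b [_ [E _]]]]|[[a [b [_ [E _]]]]|[[a [_ [E _]]]|[a [_ [E _]]]]]]]]];
    subst n; simpl in Hx; try (eapply tag_ne; [| |exact Hx]; lia).
  - destruct Hx as [Hx|Hx]; rewrite Hx in B; [apply (notB4 x)|apply (notB5 x)]; auto.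
  - destruct Hx as [Hx|Hx].
    + destruct (code4 _ _ Hx) as [u ->]. simpl in B. apply (notB5 _ B).
    + destruct (code5 _ _ Hx) as [u ->]. simpl in B. apply (notB4 _ B).
Qed.

Theorem mainTheorem9 :
  forall t : term, closed_term t ->
    ~ Pp lfpTP (code (Pr t)) /\ ~ Pp lfpTP (code (NPr t)).
Proof.
  intros t _. split; intro H; specialize (H Xm Xm_pre); simpl in H; apply H; eauto.
Qed.
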